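(* Let $(X,\sigma)$ be a primitive aperiodic $S$-adic subshift based on substitutions $\chi_i:\mathcal A_i\to\mathcal A_{i-1}^+$, $i\in\mathbb N$. If for every $k\in\mathbb N$ there are $i<j$ and letters $a\in\mathcal A_{i-1}$, $b\in\mathcal A_j$ such that $a^k$ is a subword of $\chi_i\circ\cdots\circ\chi_j(b)$, then $(X,\sigma)$ is not linearly recurrent.
   Context: Given finite alphabets $\mathcal A_i$ and substitutions $\chi_i:\mathcal A_i\to\mathcal A_{i-1}^+$ (extended to words by concatenation), the $S$-adic subshift $X$ is the shift-orbit closure of the set of accumulation points of $\{\chi_1\circ\cdots\circ\chi_n(a):n\in\mathbb N,a\in\mathcal A_n\}$, with $\sigma$ the left shift. It is primitive if for every $m\in\mathbb N$ there is $n\ge m$ such that for all $a\in\mathcal A_n$ the word $\chi_m\circ\cdots\circ\chi_n(a)$ contains every letter of $\mathcal A_{m-1}$. It is aperiodic if there are no $x\in X$, $k\in\mathbb N$ with $\sigma^kx=x$. It is linearly recurrent if there is $L$ such that for every $x\in X$ every subword $w$ of $x$ reappears in $x$ with gap at most $L|w|$. *)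

(* Defs.v *)
From mathcomp Require Import all_boot all_order all_algebra.
Set Implicit Arguments. Unset Strict Implicit. Unset Printing Implicit Defensive.
Import GRing.Theory Num.Theory.

(* Indexing convention: alphabets [A n] for n : nat (paper's A_n, n >= 0);
   [chi n : A n.+1 -> seq (A n)] is the paper's chi_{n+1} : A_{n+1} -> A_n^+. *)

Section SAdic.
Variable A : nat -> finType.
Variable chi : forall n, A n.+1 -> seq (A n).

Definition subst_word (n : nat) (w : seq (A n.+1)) : seq (A n) :=
  flatten (map (@chi n) w).

(* scomp i d = chi_{i+1} o ... o chi_{i+d} : words over A_{d+i} -> words over A_i
   (identity for d = 0). *)
Arguments subst_word n w : clear implicits.
Fixpoint scomp (i d : nat) : seq (A (d + i)) -> seq (A i) :=
  match d return seq (A (d + i)) -> seq (A i) with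
  | 0 => fun w => w
  | d'.+1 => fun w => @scomp i d' (@subst_word (d' + i) w)
  end.

Definition nonerasing : Prop := forall n (b : A n.+1), chi b != [::].

(* primitivity: for every m >= 1 there is n >= m such that for all a in A_n,
   chi_m o ... o chi_n (a) contains every letter of A_{m-1}.
   (i = m-1, d = n-m+1 >= 1) *)
Definition primitive : Prop :=
  forall i : nat, exists d : nat,
    forall (a : A (d.+1 + i)) (c : A i), c \in @scomp i d.+1 [:: a].

Definition config := int -> A 0.

Definition window (x : config) (m : int) (len : nat) : seq (A 0) :=
  mkseq (fun k => x (m + k%:Z)%R) len.

Definition in_X (x : config) : Prop :=
  forall (m : int) (len : nat), exists (d : nat) (a : A (d.+1 + 0)),
    infix (window x m len) (@scomp 0 d.+1 [:: a]).

Definition shift (x : config) : config := fun n => x (n + 1)%R.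

Definition aperiodic : Prop :=
  ~ exists (x : config) (k : nat), [/\ in_X x, (0 < k)%N & forall n, iter k shift x n = x n].

Definition linearly_recurrent : Prop :=
  exists L : nat, forall x : config, in_X x ->
    forall (q : int) (len : nat), (0 < len)%N ->
      exists q' : int, [/\ (q < q')%R, (q' <= q + (L * len)%N%:Z)%R &
                           window x q' len = window x q len].
End SAdic.
Arguments scomp {A} chi i d _.

(* Main.v *)
Require Import Defs.
From mathcomp Require Import all_boot all_order all_algebra zify.
From Stdlib Require Import Classical ClassicalEpsilon.
Set Implicit Arguments. Unset Strict Implicit. Unset Printing Implicit Defensive.

Fixpoint down (A : nat -> finType) (chi : forall n, A n.+1 -> seq (A n)) (n : nat)
  : seq (A n) -> seq (A 0) :=
  match n return seq (A n) -> seq (A 0) with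
  | 0 => fun w => w
  | n'.+1 => fun w => down chi (subst_word chi w)
  end.

Lemma down_cat (A : nat -> finType) (chi : forall n, A n.+1 -> seq (A n)) n (u v : seq (A n)) :
  down chi (u ++ v) = down chi u ++ down chi v.
Proof.
elim: n u v => [//|n IH] u v /=.
by rewrite /subst_word map_cat flatten_cat IH.
Qed.

Lemma down_nil (A : nat -> finType) (chi : forall n, A n.+1 -> seq (A n)) n : down chi ([::] : seq (A n)) = [::].
Proof. by elim: n. Qed.

Lemma down_cons (A : nat -> finType) (chi : forall n, A n.+1 -> seq (A n)) n (c : A n) v : down chi (c :: v) = down chi [:: c] ++ down chi v.
Proof. by rewrite -down_cat. Qed.

Lemma down_scomp (A : nat -> finType) (chi : forall n, A n.+1 -> seq (A n)) i d (w : seq (A (d + i))) :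
  down chi (scomp chi i d w) = down chi w.
Proof.
elim: d w => [//|d IH] w /=.
exact: IH.
Qed.

Lemma down_nonempty (A : nat -> finType) (chi : forall n, A n.+1 -> seq (A n)) n (w : seq (A n)) :
  nonerasing chi -> w != [::] -> down chi w != [::].
Proof.
move=> ne; elim: n w => [//|n IH] w /=.
case: w => [//|c w] _; apply: IH.
rewrite /subst_word /=. have := ne _ c. by case: (chi _ c).
Qed.

Lemma size_down_ge (A : nat -> finType) (chi : forall n, A n.+1 -> seq (A n)) n (w : seq (A n)) :
  nonerasing chi -> size w <= size (down chi w).
Proof.
move=> ne; elim: w => [|c w IH]; first by [].
rewrite down_cons size_cat /=.
have := down_nonempty (w:=[:: c]) ne isT.
case: (down chi [:: c]) => //= ? ? _; lia.
Qed.

Lemma size_down_le (A : nat -> finType) (chi : forall n, A n.+1 -> seq (A n)) n (w : seq (A n)) :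
  size (down chi w) <= size w * \max_(c : A n) size (down chi [:: c]).
Proof.
elim: w => [|c w IH]; first by rewrite down_nil.
rewrite down_cons size_cat mulSn leq_add //. exact: (leq_bigmax (F:=fun c => size (down chi [:: c]))).
Qed.


Lemma infix_down (A : nat -> finType) (chi : forall n, A n.+1 -> seq (A n)) n (u v : seq (A n)) : infix u v -> infix (down chi u) (down chi v).
Proof.
move=> /infixP [s [s' ->]]. by rewrite !down_cat infix_infix.
Qed.

Definition lang (A : nat -> finType) (chi : forall n, A n.+1 -> seq (A n)) (w : seq (A 0)) :=
  exists n (b : A n), 0 < n /\ infix w (down chi [:: b]).

Definition hyp4 (A : nat -> finType) (chi : forall n, A n.+1 -> seq (A n)) :=
  (forall k : nat, exists (i d : nat) (a : A i) (b : A (d.+2 + i)),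
      infix (nseq k a) (@scomp A chi i d.+2 [:: b])).

Lemma lang_infix (A : nat -> finType) (chi : forall n, A n.+1 -> seq (A n)) v w :
  infix v w -> lang chi w -> lang chi v.
Proof.
move=> Hvw [n [b [Hn Hw]]]; exists n, b; split=> //; exact: infix_trans Hw.
Qed.

Lemma long_words (A : nat -> finType) (chi : forall n, A n.+1 -> seq (A n)) :
  nonerasing chi -> hyp4 chi -> forall N, exists w, lang chi w /\ N <= size w.
Proof.
move=> ne h4 N; have [i [d [a [b Hab]]]] := h4 N.
exists (down chi (nseq N a)); split.
  exists (d.+2 + i), b; split; first lia.
  rewrite -down_scomp; exact: infix_down.
by apply: leq_trans (size_down_ge _ ne); rewrite size_nseq.
Qed.

Lemma level_words (A : nat -> finType) (chi : forall n, A n.+1 -> seq (A n)) :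
  nonerasing chi -> hyp4 chi -> forall M, exists g (b : A (g + M)),
    3 <= size (scomp chi M g [:: b]).
Proof.
move=> ne h4 M.
pose B := \max_(j < M.+1) \max_(b : A j) size (down chi [:: b]).
pose C := \max_(c : A M) size (down chi [:: c]).
have [w [[n [b [Hn Hw]]] Hsz]] := long_words ne h4 (B + 2 * C).+1.
have Hsz2 := leq_trans Hsz (size_infix Hw).
case: (leqP n M) => HnM.
  have : size (down chi [:: b]) <= B.
    apply: leq_trans (leq_bigmax (F := fun j : 'I_M.+1 => \max_(b : A j) size (down chi [:: b])) (Ordinal (n:=M.+1) (m:=n) HnM)).
    exact: (leq_bigmax (F := fun b : A n => size (down chi [:: b]))).
  move=> H1; exfalso.
  have H2 := leq_ltn_trans H1 (leq_ltn_trans (leq_addr _ _) Hsz2).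
  by rewrite ltnn in H2.
have [g Hg] : exists g, n = g + M by exists (n - M); lia.
subst n; exists g, b.
move: Hsz2; rewrite -down_scomp => Hsz2.
have := size_down_le chi (scomp chi M g [:: b]).
rewrite -/C; case: (leqP 3 (size (scomp chi M g [:: b]))) => // Hs Hle.
have : size (scomp chi M g [:: b]) * C <= 2 * C by apply: leq_mul; lia.
move=> H3; exfalso.
have H4 := leq_ltn_trans (leq_addl B (2*C)) Hsz2.
by have := leq_ltn_trans (leq_trans Hle H3) H4; rewrite ltnn.
Qed.

Lemma extend (A : nat -> finType) (chi : forall n, A n.+1 -> seq (A n)) :
  nonerasing chi -> primitive chi -> hyp4 chi -> forall w, lang chi w ->
  exists l r, [/\ 0 < size l, 0 < size r & lang chi (l ++ w ++ r)].
Proof.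
move=> ne pr h4 w [n [a [Hn Hw]]].
have [e He] := pr n.
have [g [b Hb]] := level_words ne h4 (e.+1 + n).
case Ev: (scomp chi (e.+1 + n) g [:: b]) Hb => [|x1 [|c [|x3 t]]] // _.
have [s1 [s2 Es]] : exists s1 s2, scomp chi n e.+1 [:: c] = s1 ++ a :: s2.
  by case/splitPr: (He c a) => s1 s2; exists s1, s2.
have [p [q Ew]] : exists p q, down chi [:: a] = p ++ w ++ q by apply/infixP.
have E1 : down chi [:: b] = down chi [:: x1] ++ (down chi s1 ++ p) ++ w ++ (q ++ down chi s2) ++ down chi (x3 :: t).
  rewrite -down_scomp Ev down_cons (down_cons chi c).
  have -> : down chi [:: c] = down chi (scomp chi n e.+1 [:: c]) by rewrite down_scomp.
  rewrite Es.
  by rewrite down_cat (down_cons chi a s2) Ew !catA.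
exists (down chi [:: x1] ++ (down chi s1 ++ p)), ((q ++ down chi s2) ++ down chi (x3 :: t)).
split.
- rewrite size_cat; have := down_nonempty (w := [:: x1]) ne isT.
  case: (down chi [:: x1]) => //= *; lia.
- rewrite size_cat; have := down_nonempty (w := x3 :: t) ne isT.
  case: (down chi (x3 :: t)) => //= *; lia.
- exists (g + (e.+1 + n)), b; split; first lia.
  by rewrite E1 !catA infix_refl.
Qed.

Section Build.
Local Open Scope ring_scope.
End Build.

Fixpoint iterW (T : Type) (f : seq T -> seq T * seq T) (w0 : seq T) (n : nat) : seq T :=
  match n with
  | 0 => w0
  | n'.+1 => let w := iterW f w0 n' in (f w).1 ++ w ++ (f w).2
  end.

Fixpoint offs (T : Type) (f : seq T -> seq T * seq T) (w0 : seq T) (n : nat) : nat :=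
  match n with
  | 0 => 0
  | n'.+1 => size (f (iterW f w0 n')).1 + offs f w0 n'
  end.

Lemma mkseq_take_drop (T : Type) (x0 : T) (s : seq T) j len :
  (j + len <= size s)%N ->
  mkseq (fun k => nth x0 s (j + k)) len = take len (drop j s).
Proof.
move=> H; apply: (@eq_from_nth _ x0).
  by rewrite size_mkseq size_take size_drop; case: ltnP => //; lia.
move=> i; rewrite size_mkseq => Hi.
by rewrite nth_mkseq // nth_take // nth_drop.
Qed.

Lemma eq_mkseq_in (T : Type) (f g : nat -> T) n :
  (forall k, (k < n)%N -> f k = g k) -> mkseq f n = mkseq g n.
Proof.
move=> H; rewrite /mkseq; apply/eq_in_map => k; rewrite mem_iota add0n; exact: H.
Qed.

Lemma build (T : eqType) (P : seq T -> Prop) (f : seq T -> seq T * seq T) (x0 : T) w0 :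
  (forall w, P w -> [/\ (0 < size (f w).1)%N, (0 < size (f w).2)%N & P ((f w).1 ++ w ++ (f w).2)]) ->
  P w0 -> (0 < size w0)%N -> (forall v w, infix v w -> P w -> P v) ->
  exists x : int -> T, (forall m len, P (mkseq (fun k => x (m + k%:Z)%R) len)) /\
     mkseq (fun k => x (0 + k%:Z)%R) (size w0) = w0.
Proof.
move=> Hf Pw0 Hw0 Pinf.
pose W := iterW f w0; pose o := offs f w0.
have inv : forall n, [/\ P (W n), (n <= o n)%N & (o n + n + 1 <= size (W n))%N].
  elim=> [|n [IH1 IH2 IH3]]; first by split=> //=; lia.
  have [H1 H2 H3] := Hf _ IH1.
  split=> //=; rewrite /o /W /= -/(W n) -/(o n) ?size_cat; lia.
have nest : forall k n, exists Pr S, W (k + n)%N = Pr ++ W n ++ S /\ o (k + n)%N = (size Pr + o n)%N.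
  move=> k n; elim: k => [|k [Pr [S [E1 E2]]]]; first by exists [::], [::]; rewrite cats0.
  exists ((f (W (k + n)%N)).1 ++ Pr), (S ++ (f (W (k + n)%N)).2).
  rewrite /W /o /= -/(W (k+n)%N) -/(o (k+n)%N) E2 size_cat E1 !catA; split=> //.
  by rewrite addnA.
pose x := fun z : int => nth x0 (W (absz z).+1) (absz ((o (absz z).+1)%:Z + z)%R).
have key : forall z N, ((absz z).+1 <= N)%N -> x z = nth x0 (W N) (absz ((o N)%:Z + z)%R).
  move=> z N HN; have [k Hk] : exists k, N = (k + (absz z).+1)%N by exists (N - (absz z).+1)%N; lia.
  have [Pr [S [E1 E2]]] := nest k (absz z).+1.
  have [_ I2 I3] := inv (absz z).+1.
  rewrite /x Hk E1 E2.
  have -> : absz ((size Pr + o (absz z).+1)%N%:Z + z)%R = (size Pr + absz ((o (absz z).+1)%:Z + z)%R)%N by lia.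
  rewrite nth_cat ltnNge leq_addr /= addKn nth_cat.
  by have -> : (absz ((o (absz z).+1)%:Z + z)%R < size (W (absz z).+1))%N by lia.
exists x; split.
  move=> m len; set N := ((absz m) + len + 1)%N.
  have [I1 I2 I3] := inv N.
  have -> : mkseq (fun k => x (m + k%:Z)%R) len = mkseq (fun k => nth x0 (W N) (absz ((o N)%:Z + m)%R + k)) len.
    apply: eq_mkseq_in => k Hk.
    rewrite (key (m + k%:Z)%R N); last by rewrite /N; lia.
    congr nth; lia.
  rewrite mkseq_take_drop; last by rewrite /N in I2 I3 *; lia.
  apply: Pinf I1; exact: infix_trans (infix_take _ _) (infix_drop _ _).
set N := ((size w0).+1 + 0)%N.
have [Pr [S [E1 E2]]] := nest (size w0).+1 0.
have -> : mkseq (fun k => x (0 + k%:Z)%R) (size w0) = mkseq (fun k => nth x0 (W N) (size Pr + k)) (size w0).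
  apply: eq_mkseq_in => k Hk.
  rewrite (key (0 + k%:Z)%R N); last by rewrite /N; lia.
  have o0 : o 0%N = 0%N by [].
  rewrite E2 o0; congr nth; lia.
have W0 : W 0%N = w0 by [].
rewrite W0 in E1.
rewrite mkseq_take_drop; last by rewrite E1 !size_cat; lia.
by rewrite E1 drop_size_cat // take_size_cat.
Qed.

Lemma per_nth (T : Type) (x0 : T) (u : seq T) (V : nat -> seq T) :
  V 0 = [::] -> (forall K, V K.+1 = u ++ V K) ->
  forall K n, n + size u < size (V K) -> nth x0 (V K) n = nth x0 (V K) (n + size u).
Proof.
move=> V0 VS; elim=> [|K IH] n; first by rewrite V0.
rewrite VS size_cat => Hn.
rewrite !nth_cat; case: ltnP => Hnu.
  rewrite ltnNge leq_addl /= addnK.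
  case: K IH Hn => [|K] IH Hn; first by move: Hn; rewrite V0 /=; lia.
  by rewrite VS nth_cat Hnu.
rewrite ltnNge leq_addl /=.
rewrite (IH (n - size u)); last lia.
by rewrite subnK // addnK.
Qed.

Lemma lang_inX (A : nat -> finType) (chi : forall n, A n.+1 -> seq (A n)) w :
  lang chi w -> exists d (a : A (d.+1 + 0)), infix w (scomp chi 0 d.+1 [:: a]).
Proof.
move=> [n [b [Hn Hw]]].
have [d Hd] : exists d, n = (d.+1 + 0)%N by exists n.-1; lia.
subst n; exists d, b.
have E : down chi (scomp chi 0 d.+1 [:: b]) = down chi [:: b] := down_scomp _ _.
by rewrite -E in Hw.
Qed.

Lemma inX_lang (A : nat -> finType) (chi : forall n, A n.+1 -> seq (A n)) x m len :
  in_X chi x -> lang chi (window x m len).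
Proof.
move=> /(_ m len) [d [a Ha]]; exists (d.+1 + 0)%N, a; split; first lia.
have E : down chi (scomp chi 0 d.+1 [:: a]) = down chi [:: a] := down_scomp _ _.
by rewrite -E.
Qed.

Lemma iter_shift (A : nat -> finType) k (y : config A) n :
  iter k (@shift A) y n = y (n + k%:Z)%R.
Proof.
elim: k n => [|k IH] n; first by rewrite /=; congr y; lia.
rewrite iterS /shift IH; congr y; lia.
Qed.
Import Order.TTheory GRing.Theory Num.Theory.

Unset Implicit Arguments.
Theorem lemma2p5 (A : nat -> finType) (chi : forall n, A n.+1 -> seq (A n)) :
  nonerasing chi -> primitive chi -> aperiodic chi ->
  (forall k : nat, exists (i d : nat) (a : A i) (b : A (d.+2 + i)),
      infix (nseq k a) (@scomp A chi i d.+2 [:: b])) ->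
  ~ linearly_recurrent chi.
Proof.
move=> ne pr ap h4 [L HL].
pose K := (2 * L + 2)%N.
have [i [d [a [b Hab]]]] := h4 K.
pose u := down chi [:: a]; pose p := size u.
have Hp : (0 < p)%N by rewrite /p lt0n size_eq0; exact: down_nonempty.
pose V := fun k => down chi (nseq k a).
have V0 : V 0%N = [::] by rewrite /V down_nil.
have VS : forall k, V k.+1 = u ++ V k by move=> k; rewrite /V /= down_cons.
have sizeV : forall k, size (V k) = (k * p)%N.
  by elim=> [|k IH]; rewrite ?V0 // VS size_cat IH mulSn.
have langU : lang chi (V K).
  exists (d.+2 + i)%N, b; split; first lia.
  rewrite -down_scomp; exact: infix_down.
have [x0 _] : exists x0 : A 0, True.
  have : (0 < size (V K))%N by rewrite sizeV /K; nia.
  by case: (V K) => [|c ?] //; exists c.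
have E : forall w : seq (A 0), {lr : seq (A 0) * seq (A 0) | lang chi w ->
    [/\ (0 < size lr.1)%N, (0 < size lr.2)%N & lang chi (lr.1 ++ w ++ lr.2)]}.
  move=> w; apply: constructive_indefinite_description.
  case: (classic (lang chi w)) => Hw.
    have [l [r Hlr]] := extend ne pr h4 Hw; by exists (l, r).
  by exists ([::], [::]).
have [x [Hx HxU]] := build x0 (fun w => svalP (E w)) langU
   (ltac:(rewrite sizeV /K; nia)) (@lang_infix A chi).
have inx : in_X chi x by move=> m len; apply: lang_inX; exact: Hx.
have xU : forall n : nat, (n < K * p)%N -> x n%:Z%R = nth x0 (V K) n.
  move=> n Hn; rewrite -HxU nth_mkseq; last by rewrite sizeV.
  by congr x; lia.
have pos : forall n : nat, (n + p < K * p)%N -> x n%:Z%R = x (n%:Z%R + p%:Z%R)%R.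
  move=> n Hn; rewrite xU; last lia.
  have -> : (n%:Z%R + p%:Z%R)%R = (n + p)%N%:Z%R by lia.
  rewrite xU // (per_nth x0 V0 VS) // sizeV //.
case: (classic (forall j : nat, x (- (j.+1)%:Z%R)%R = x (- (j.+1)%:Z%R + p%:Z%R)%R)) => Hneg.
- (* Case B: periodic point *)
  have Hneg' : forall z : int, (z < 0)%R -> x z = x (z + p%:Z%R)%R.
    move=> z Hz; have := Hneg (absz z).-1.
    by have -> : (- ((absz z).-1.+1)%:Z%R)%R = z by lia.
  have ind : forall (t : nat) (c : int), (c + (t * p)%N%:Z%R <= 0)%R -> x c = x (c + (t * p)%N%:Z%R)%R.
    elim=> [|t IH] c Hc; first by congr x; lia.
    rewrite Hneg'; last by lia.
    rewrite IH; last by nia.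
    congr x; nia.
  have per : forall (a1 b1 t : int), (a1 <= 0)%R -> (b1 <= 0)%R -> a1 = (b1 + t * p%:Z%R)%R -> x a1 = x b1.
    move=> a1 b1 t Ha Hb Hab'.
    case: (lerP 0 t) => Ht.
      have [t' Ht'] : exists t' : nat, t = t'%:Z%R by exists (absz t); lia.
      rewrite (ind t' b1); [congr x | ]; nia.
    rewrite (ind (absz t) a1); [congr x | ]; nia.
  pose y : config A := fun z => x (z - (p * (absz z).+1)%N%:Z%R)%R.
  apply: ap; exists y, p; split => //.
    move=> m len.
    have -> : window y m len = window x (m - (p * (absz m + len).+1)%N%:Z%R)%R len.
      apply: eq_mkseq_in => k Hk; rewrite /y.
      apply: (per _ _ ((absz m + len).+1%:Z%R - (absz (m + k%:Z%R)%R).+1%:Z%R)%R); nia.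
    exact: inx.
  move=> n; rewrite iter_shift /y.
  apply: (per _ _ (1 - (absz (n + p%:Z%R)%R)%:Z%R + (absz n)%:Z%R)%R); nia.
-
  have [j0 Hj0] : exists j : nat, x (- (j.+1)%:Z%R)%R != x (- (j.+1)%:Z%R + p%:Z%R)%R.
    apply: NNPP => H; apply: Hneg => j; apply/eqP; apply: negbNE; apply/negP => H'.
    by apply: H; exists j.
  case: (ex_minnP (ex_intro (fun j : nat => x (- (j.+1)%:Z%R)%R != x (- (j.+1)%:Z%R + p%:Z%R)%R) j0 Hj0)) => j Hj Hmin.
  have stretch : forall z : int, (- j%:Z%R <= z)%R -> (z + p%:Z%R < (K * p)%N%:Z%R)%R -> x z = x (z + p%:Z%R)%R.
    move=> z Hz1 Hz2; case: (lerP 0 z) => Hz.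
      have [n Hn] : exists n : nat, z = n%:Z%R by exists (absz z); lia.
      subst z; apply: pos; lia.
    have Hlt : ((absz z).-1 < j)%N by lia.
    case: (boolP (x (- ((absz z).-1.+1)%:Z%R)%R != x (- ((absz z).-1.+1)%:Z%R + p%:Z%R)%R)) => H.
      have := Hmin _ H; lia.
    move/negbNE/eqP: H.
    by have -> : (- ((absz z).-1.+1)%:Z%R)%R = z by lia.
  have [q' [Hq1 Hq2 Hq3]] := HL x inx (- j%:Z%R - 1)%R p.+1 isT.
  have E0 := congr1 (nth x0 ^~ 0%N) Hq3.
  have Ep := congr1 (nth x0 ^~ p) Hq3.
  rewrite !nth_mkseq // in E0 Ep.
  have Hc : x q' = x (q' + p%:Z)%R.
    apply: stretch; first lia.
    rewrite /K in Hq2 *; nia.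
  have e1 : x (- (j.+1)%:Z)%R = x q'.
    rewrite (_ : q' = q' + 0%:Z)%R; last lia.
    rewrite E0; congr x; lia.
  have e2 : x (- (j.+1)%:Z + p%:Z)%R = x (q' + p%:Z)%R.
    rewrite Ep; congr x; lia.
  by rewrite e1 e2 Hc eqxx in Hj.
Qed.
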